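(* Let $\ell\ge 2$ be an integer, let $Q_\ell$ be the $\ell$-dimensional hypercube graph (vertex set $\{0,1\}^\ell$, two vertices adjacent iff they differ in exactly one coordinate), and fix a proper edge coloring of $Q_\ell$ with $\ell$ colors $C_1,\dots,C_\ell$, so that every color class $E_j$ consists of $2^{\ell-1}$ edges. Let $\epsilon>0$ and consider the Bounded Color Matching instance on $Q_\ell$ with these color classes and color bounds $w_j=2(1-\epsilon)$ for all $j\in[\ell]$. Let $\psi$ be a positive integer and define the vector $\mathbf{y}$ indexed by subsets $I$ of the edge set $E=E(Q_\ell)$ by $$y_\emptyset=1,\qquad y_{\{e\}}=\rho:=\frac{1-\epsilon}{2^{\ell-2}+\psi(1-\epsilon)}\ \ \forall e\in E,\qquad y_I=0\ \ \forall I\subseteq E,\ |I|\ge 2.$$ Then, for any $\psi=o(2^{\ell-2})$, the vector $\mathbf{y}$ is feasible for the $\psi$-th level of the Sherali–Adams hierarchy applied to the natural LP relaxation $\mathcal{M}_c$ of this instance.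
   Context: Bounded Color Matching (BCM): given a simple undirected graph $G=(V,E)$ whose edge set is partitioned into color classes $E_1\cup\dots\cup E_k$, with bounds $w_j\ge 1$ (not necessarily integral), find a matching $M$ with $|M\cap E_j|\le w_j$ for all $j$ maximizing the total profit. Its natural LP relaxation is $\mathcal{M}_c=\{x\in[0,1]^E:\ \sum_{e\in\delta(v)}x_e\le 1\ \forall v\in V,\ \sum_{e\in E_j}x_e\le w_j\ \forall j\}$, where $\delta(v)$ is the set of edges incident to $v$. Sherali–Adams hierarchy: for a polytope $F_0=\{x\in[0,1]^n: a_i^Tx\le b_i,\ i\in[m]\}$ (the box constraints $x_j\ge 0$, $1-x_j\ge 0$ counted among its constraints), the level-$\psi$ lifted system has variables $y_Z$ for $Z\subseteq[n]$ with $y_\emptyset=1$, and for every pair of disjoint sets $\Gamma,\Delta\subseteq[n]$ with $|\Gamma|+|\Delta|\le\psi$ contains (i) for each constraint $b_i-a_i^Tx\ge 0$ the constraint $\sum_{H\subseteq\Delta}(-1)^{|H|}\big(b_i\,y_{\Gamma\cup H}-\sum_{j}a_{ij}\,y_{\Gamma\cup H\cup\{j\}}\big)\ge 0$ (this is the linearization of $(b_i-a_i^Tx)\prod_{\gamma\in\Gamma}x_\gamma\prod_{\delta\in\Delta}(1-x_\delta)\ge0$ using $x_i^2=x_i$ and replacing $\prod_{\zeta\in Z}x_\zeta$ by $y_Z$), and (ii) $\sum_{H\subseteq\Delta}(-1)^{|H|}y_{\Gamma\cup H}\ge 0$. A vector $\mathbf{y}$ is feasible for level $\psi$ if it satisfies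 all these constraints; the level-$\psi$ relaxation $F_\psi$ is the projection $\{x: \exists\, \mathbf{y}\text{ feasible},\ y_{\{i\}}=x_i\ \forall i\}$. *)

(* Defs.v *)
From HB Require Import structures.
From mathcomp Require Import all_boot all_order all_algebra.
Set Implicit Arguments. Unset Strict Implicit. Unset Printing Implicit Defensive.
Import Order.TTheory GRing.Theory Num.Theory.
Local Open Scope ring_scope.

(* A polytope F0 = {x in [0,1]^T : a_i^T x <= b_i, i in I}; the index type I
   must already contain the box constraints (as the paper counts them).
   y : {set T} -> R is the vector of lifted variables y_Z. *)
Definition SA_feasible (R : numDomainType) (T I : finType)
    (a : I -> T -> R) (b : I -> R) (psi : nat) (y : {set T} -> R) : Prop :=
  y set0 = 1 /\
  forall Gam Del : {set T}, [disjoint Gam & Del] -> (#|Gam| + #|Del| <= psi)%N ->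
    (forall i : I,
       0 <= \sum_(H in powerset Del)
              (-1) ^+ #|H| * (b i * y (Gam :|: H)
                              - \sum_(j : T) a i j * y (Gam :|: H :|: [set j])))
    /\ 0 <= \sum_(H in powerset Del) (-1) ^+ #|H| * y (Gam :|: H).

(* Constraints (as a_i^T x <= b_i):
   - inl (inl v) : sum_{e in delta(v)} x_e <= 1
   - inl (inr j) : sum_{e in E_j} x_e <= w_j
   - inr (inl e) : - x_e <= 0          (box)
   - inr (inr e) : x_e <= 1            (box) *)
Definition BCM_a (R : nzRingType) (V E K : finType) (inc : E -> V -> bool)
  (col : E -> K) : ((V + K) + (E + E))%type -> E -> R :=
  fun i f => match i with
  | inl (inl v) => (inc f v)%:R
  | inl (inr j) => (col f == j)%:R
  | inr (inl e) => - (f == e)%:R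
  | inr (inr e) => (f == e)%:R
  end.

Definition BCM_b (R : nzRingType) (V E K : finType) (w : K -> R) :
  ((V + K) + (E + E))%type -> R :=
  fun i => match i with
  | inl (inl _) => 1
  | inl (inr j) => w j
  | inr (inl _) => 0
  | inr (inr _) => 1
  end.

Definition cube_vertex (l : nat) := {ffun 'I_l -> bool}.

Definition cube_adj (l : nat) (u v : cube_vertex l) : bool :=
  #|[set i : 'I_l | u i != v i]| == 1%N.

Definition is_cube_edge (l : nat) (e : {set cube_vertex l}) : bool :=
  [exists u, exists v, (e == [set u; v]) && cube_adj u v].

Definition cube_edge (l : nat) := {e : {set cube_vertex l} | is_cube_edge e}.

Definition cube_inc (l : nat) (e : cube_edge l) (v : cube_vertex l) : bool :=
  v \in val e.

Definition proper_coloring (l : nat) (col : cube_edge l -> 'I_l) : Prop :=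
  forall e f : cube_edge l, e != f ->
    [exists v, cube_inc e v && cube_inc f v] -> col e != col f.

Definition y_vec (R : fieldType) (l psi : nat) (eps : R)
    (Z : {set cube_edge l}) : R :=
  if Z == set0 then 1
  else if #|Z| == 1%N then
    (1 - eps) / (2 ^+ (l - 2) + psi%:R * (1 - eps))
  else 0.

(* Main.v *)
Require Import Defs.
From HB Require Import structures.
From mathcomp Require Import all_boot all_order all_algebra.
From mathcomp Require Import zify ring lra.
Set Implicit Arguments. Unset Strict Implicit. Unset Printing Implicit Defensive.
Import Order.TTheory GRing.Theory Num.Theory.
Local Open Scope ring_scope.

Lemma sum_powerset_le1 (R : nmodType) (T : finType) (D : {set T})
  (g : {set T} -> R) : (forall H : {set T}, (1 < #|H|)%N -> g H = 0) ->
  \sum_(H in powerset D) g H = g set0 + \sum_(h in D) g [set h].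
Proof.
move=> g0.
rewrite (bigID (fun H : {set T} => #|H| <= 1)%N) /= [X in _ + X]big1 ?addr0; last first.
  by move=> H /andP[_]; rewrite -ltnNge; apply: g0.
rewrite (eq_bigl (fun H => H \in set0 |: [set [set h] | h in D])); last first.
  move=> H; rewrite in_setU1 powersetE.
  have [->|H0] := eqVneq H set0; first by rewrite sub0set cards0.
  apply/andP/imsetP.
    move=> [sHD c1]; have: #|H| = 1%N.
      by apply/eqP; rewrite eqn_leq c1 card_gt0.
    by move=> /eqP /cards1P [h Hh]; rewrite Hh in sHD *; exists h => //; rewrite -sub1set.
  by move=> [h hD ->]; rewrite sub1set hD cards1.
rewrite big_setU1 /=; last first.
  by apply/imsetP => -[h _ /esym /eqP]; rewrite -cards_eq0 cards1.
by rewrite big_imset //= => x y _ _; apply: set1_inj.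
Qed.

Lemma l_le_pow l : (4 <= l)%N -> (l <= 2 ^ (l - 2))%N.
Proof.
move=> /subnK <-.
have -> : (l - 4 + 4 - 2 = (l - 4) + 2)%N by lia.
elim: (l - 4)%N => [|n IH] //.
rewrite !addSn expnS. lia.
Qed.

Lemma sum_bool_card (R : nzSemiRingType) (T : finType) (P : pred T) :
  \sum_(j : T) ((P j)%:R : R) = (#|[set j | P j]|)%:R.
Proof.
rewrite -sum1_card natr_sum [RHS]big_mkcond /=; apply: eq_bigr => j _.
by rewrite inE; case: (P j).
Qed.

Lemma edge_card2 l (e : cube_edge l) : #|val e| = 2%N.
Proof.
case: e => /= e /existsP[u /existsP[v /andP[/eqP -> adj]]].
rewrite cards2; case: eqVneq => // uv; move: adj; rewrite /cube_adj uv.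
rewrite (_ : [set i | v i != v i] = set0) ?cards0 //.
by apply/setP => i; rewrite !inE eqxx.
Qed.

Lemma color_count l (col : cube_edge l -> 'I_l) (Hcol : proper_coloring col)
  (c : 'I_l) : (#|[set e | col e == c]| * 2 <= 2 ^ l)%N.
Proof.
set S := [set e | col e == c].
rewrite -sum_nat_const.
have -> : ((\sum_(e in S) 2) = \sum_(e in S) \sum_(v : cube_vertex l) (v \in val e : nat))%N.
  apply: eq_bigr => e _; rewrite -(edge_card2 e) -sum1_card big_mkcond /=.
  by apply: eq_bigr => v _; case: (v \in val e).
rewrite exchange_big /=.
have -> : (2 ^ l = \sum_(v : cube_vertex l) 1)%N.
  by rewrite sum1_card card_ffun card_bool card_ord.
apply: leq_sum => v _.
have -> : (\sum_(e in S) (v \in val e : nat) = #|[set e in S | v \in val e]|)%N.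
  rewrite -sum1_card [RHS]big_mkcond [LHS]big_mkcond /=; apply: eq_bigr => e _.
  by rewrite !inE; case: (col e == c); case: (v \in _).
apply/card_le1_eqP => e f; rewrite !inE => /andP[ce ve] /andP[cf vf].
apply/eqP; apply/negPn/negP => nef.
have := Hcol e f; rewrite eq_sym nef (eqP ce) (eqP cf) eqxx => /(_ isT) H; suff: false by []; apply: H.
by apply/existsP; exists v; rewrite /cube_inc ve vf.
Qed.

Lemma degree_bound l (col : cube_edge l -> 'I_l) (Hcol : proper_coloring col)
  (v : cube_vertex l) : (#|[set e | cube_inc e v]| <= l)%N.
Proof.
rewrite -(card_in_imset (f := col)); last first.
  move=> e f; rewrite !inE => ve vf cef; apply/eqP; apply/negPn/negP => nef.
  have := Hcol e f nef; rewrite cef eqxx => H; suff: false by []; apply: H.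
  by apply/existsP; exists v; rewrite ve vf.
by rewrite -[X in (_ <= X)%N]card_ord max_card.
Qed.

Lemma y_big (R : fieldType) l p (eps : R) (Z : {set cube_edge l}) :
  (1 < #|Z|)%N -> @y_vec R l p eps Z = 0.
Proof.
move=> hZ; rewrite /y_vec; case: eqVneq => [Z0|_]; first by rewrite Z0 cards0 in hZ.
by rewrite gtn_eqF.
Qed.

Lemma y_one (R : fieldType) l p (eps : R) (Z : {set cube_edge l}) :
  #|Z| = 1%N -> @y_vec R l p eps Z = (1 - eps) / (2 ^+ (l - 2) + p%:R * (1 - eps)).
Proof.
move=> hZ; rewrite /y_vec hZ eqxx; case: eqVneq => [Z0|//].
by rewrite Z0 cards0 in hZ.
Qed.

Lemma y_zero (R : fieldType) l p (eps : R) : @y_vec R l p eps set0 = 1.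
Proof. by rewrite /y_vec eqxx. Qed.

Lemma sum_ind (R : nzSemiRingType) (T : finType) (D : {set T}) (e : T) :
  \sum_(h in D) ((h == e)%:R : R) = (e \in D)%:R.
Proof.
rewrite big_mkcond (bigD1 e) //= eqxx big1 ?addr0; first by case: (e \in D).
by move=> h /negbTE ->; case: (h \in D).
Qed.

Lemma sum_ind_all (R : nzSemiRingType) (T : finType) (e : T) :
  \sum_(h : T) ((h == e)%:R : R) = 1.
Proof.
by rewrite (bigD1 e) //= eqxx big1 ?addr0 // => h /negbTE ->.
Qed.

Unset Implicit Arguments.

Theorem mainTheorem1 (R : realFieldType) (eps : R) :
  0 < eps -> eps <= 1 / 2 ->
  forall psi : nat -> nat,
    (forall l, (0 < psi l)%N) ->
    (* psi = o(2^(l-2)) *)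
    (forall d : R, 0 < d -> exists N : nat, forall l : nat, (N <= l)%N ->
        (psi l)%:R <= d * 2 ^+ (l - 2)) ->
  exists L : nat, forall l : nat, (2 <= l)%N -> (L <= l)%N ->
    forall col : cube_edge l -> 'I_l, proper_coloring col ->
      SA_feasible (@BCM_a R (cube_vertex l) (cube_edge l) 'I_l (@cube_inc l) col)
                  (@BCM_b R (cube_vertex l) (cube_edge l) 'I_l
                          (fun _ : 'I_l => 2 * (1 - eps)))
                  (psi l) (@y_vec R l (psi l) eps).
Proof.
move=> e0 e1 psi _ _; exists 4%N => l l2 l4 col Hcol.
split; first by rewrite y_zero.
move=> Gam Del dis hc.
set p := psi l.
set den : R := 2 ^+ (l - 2) + p%:R * (1 - eps).
set rho : R := (1 - eps) / den.
have y1 (Z : {set cube_edge l}) : #|Z| = 1%N -> @y_vec R l p eps Z = rho by move=> hZ; rewrite y_one.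
have yb := @y_big R l p eps.
have y0 := @y_zero R l p eps.
have pos2 : (0 : R) < 2 ^+ (l - 2) by rewrite exprn_gt0.
have den0 : 0 < den by rewrite /den; apply: ltr_wpDr => //; apply: mulr_ge0 => //; lra.
have dn : den != 0 by rewrite gt_eqF.
have rho0 : 0 <= rho by rewrite /rho divr_ge0 //; [lra | exact: ltW].
have key (x : R) : x * (1 - eps) <= den -> x * rho <= 1.
  by move=> hx; rewrite /rho mulrA ler_pdivrMr // mul1r.
have powl : (l%:R : R) <= 2 ^+ (l - 2).
  by rewrite -natrX ler_nat l_le_pow.
have bnd : (l%:R + p%:R) * rho <= 1.
  apply: key; rewrite /den mulrDl lerD2r.
  have : (0 : R) <= l%:R by [].
  nra.
have l1 : (1 : R) <= l%:R by rewrite ler1n; clear -l2; lia.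
have hcolE : 2 * (1 - eps) * (1 - p%:R * rho) = 2 ^+ (l - 1) * rho.
  have -> : (l - 1 = (l - 2).+1)%N by clear -l2; lia.
  rewrite exprS /rho; move: dn; rewrite /den => dn; field.
  exact: dn.
have sub_card (A B : {set cube_edge l}) : A \subset B -> (#|A| <= #|B|)%N.
  exact: subset_leq_card.
case: (ltngtP #|Gam| 1) => hG; last first.
- (* |Gam| = 1 *)
  have [g Gg] := cards1P (introT eqP hG).
  have big2 (H X : {set cube_edge l}) : H \subset Del -> H != set0 ->
      @y_vec R l p eps (Gam :|: H :|: X) = 0 /\ @y_vec R l p eps (Gam :|: H) = 0.
    move=> sHD /set0Pn [h hH].
    have hg : h != g.
      apply/eqP => hg; move: dis; rewrite Gg disjoints1 => /negP; apply.
      by rewrite -hg (subsetP sHD).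
    have c2 : (1 < #|Gam :|: H|)%N.
      apply: leq_trans (_ : #|[set g; h]| <= _)%N.
        by rewrite cards2 eq_sym hg.
      by apply: sub_card; rewrite Gg setUSS // sub1set.
    split; apply: yb => //; apply: leq_trans c2 _; apply: sub_card; exact: subsetUl.
  have p0 : set0 \in powerset Del by rewrite powersetE sub0set.
  split; last first.
    rewrite (bigD1 set0) //= big1 ?addr0.
      by rewrite cards0 expr0 mul1r setU0 y1.
    by move=> H /andP[]; rewrite powersetE => sHD H0; have [_ ->] := big2 H set0 sHD H0; rewrite mulr0.
  move=> i; rewrite (bigD1 set0) //= [X in _ + X]big1 ?addr0; last first.
    move=> H /andP[]; rewrite powersetE => sHD H0; have [_ ->] := big2 H set0 sHD H0.
    rewrite big1 ?mulr0 ?subr0 ?mulr0 // => j _.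
    by have [-> _] := big2 H [set j] sHD H0; rewrite mulr0.
  rewrite cards0 expr0 mul1r !setU0 y1 ?Gg ?cards1 //.
  rewrite (bigD1 g) // setUid y1 ?cards1 // big1 ?addr0; last first.
    by move=> j /andP[_ jg]; rewrite yb ?mulr0 // cards2 eq_sym jg.
  rewrite Monoid.mulm1 -mulrBl; apply: mulr_ge0 => //; rewrite subr_ge0.
  case: i => [[v|c]|[e|e]] /=; rewrite /BCM_a /BCM_b.
  * by case: (cube_inc g v).
  * by case: (col g == c) => /=; lra.
  * by rewrite oppr_le0.
  * by case: (g == e).
-
  have yG (H X : {set cube_edge l}) : @y_vec R l p eps (Gam :|: H :|: X) = 0.
    by apply: yb; apply: leq_trans hG _; apply: sub_card; rewrite -setUA subsetUl.
  have yG' (H : {set cube_edge l}) : @y_vec R l p eps (Gam :|: H) = 0.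
    by apply: yb; apply: leq_trans hG _; apply: sub_card; rewrite subsetUl.
  split; [move=> i|]; rewrite big1 // => H _; rewrite yG' ?mulr0 //.
  by rewrite big1 ?subr0 ?mulr0 // => j _; rewrite yG mulr0.
-
  have G0 : Gam = set0 by apply/eqP; rewrite -cards_eq0 -leqn0 -ltnS.
  rewrite G0 cards0 add0n in hc *.
  have kp : (#|Del|%:R : R) <= p%:R by rewrite ler_nat.
  split; last first.
    rewrite sum_powerset_le1; last first.
      by move=> H hH; rewrite set0U yb ?mulr0.
    rewrite cards0 expr0 mul1r set0U y0.
    rewrite (eq_bigr (fun _ => - rho)); last first.
      by move=> h _; rewrite set0U cards1 expr1 y1 ?cards1 // mulN1r.
    rewrite sumr_const mulNrn -mulr_natr subr_ge0 mulrC.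
    apply: le_trans (_ : (l%:R + p%:R) * rho <= 1) => //.
    by apply: ler_wpM2r => //; apply: le_trans kp _; rewrite lerDr.
  move=> i.
  rewrite sum_powerset_le1; last first.
    move=> H hH; rewrite set0U yb // big1 ?mulr0 ?subr0 ?mulr0 // => j _.
    rewrite yb ?mulr0 //; apply: leq_trans hH _; apply: sub_card.
    by rewrite subsetUl.
  rewrite cards0 expr0 mul1r !set0U y0.
  have inner (h : cube_edge l) : \sum_j BCM_a R (@cube_inc l) col i j * @y_vec R l p eps ([set h] :|: [set j])
      = BCM_a R (@cube_inc l) col i h * rho.
    rewrite (bigD1 h) //= setUid (y1 _ (cards1 h)) big1 ?addr0 // => j jh.
    by rewrite yb ?mulr0 // cards2 eq_sym jh.
  under eq_bigr => j _ do rewrite set0U (y1 _ (cards1 j)).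
  under [X in _ + X]eq_bigr => h _ do rewrite !set0U inner cards1 expr1 (y1 _ (cards1 h)).
  rewrite -mulr_suml mulr1.
  set b := BCM_b _ i; set a := BCM_a _ _ _ i.
  under [X in _ + X]eq_bigr => h _ do rewrite mulN1r opprB.
  rewrite sumrB -mulr_suml sumr_const -mulr_natr.
  have pk : (0 : R) <= p%:R - #|Del|%:R by rewrite subr_ge0.
  rewrite /b /a; clear b a inner; case: i => [[v|c]|[e|e]]; rewrite /BCM_a /BCM_b.
  + rewrite sum_bool_card.
    have hA : (#|[set j | cube_inc j v]|%:R : R) <= l%:R by rewrite ler_nat (degree_bound Hcol).
    have hS : 0 <= \sum_(h in Del) ((cube_inc h v)%:R : R) by apply: sumr_ge0.
    move: hA hS; set A := (#|_|%:R : R); set S := \sum_(h in Del) _ => hA hS.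
    have h1 : 0 <= (l%:R - A) * rho by apply: mulr_ge0; rewrite ?subr_ge0.
    have h2 : 0 <= S * rho by apply: mulr_ge0.
    have h3 : 0 <= (p%:R - #|Del|%:R) * rho by apply: mulr_ge0.
    nra.
  + rewrite sum_bool_card.
    have hN : (#|[set j | col j == c]| <= 2 ^ (l - 1))%N.
      have := color_count Hcol c.
      have e2 : (2 ^ l = 2 ^ (l - 1) * 2)%N.
        by rewrite -expnSr; congr (_ ^ _)%N; clear -l2; lia.
      rewrite e2; clear -l2; lia.
    have hA : (#|[set j | col j == c]|%:R : R) <= 2 ^+ (l - 1) by rewrite -natrX ler_nat.
    have hS : 0 <= \sum_(h in Del) ((col h == c)%:R : R) by apply: sumr_ge0.
    move: hA hS; set A := (#|_|%:R : R); set S := \sum_(h in Del) _ => hA hS.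
    have h1 : 0 <= (2 ^+ (l - 1) - A) * rho by apply: mulr_ge0; rewrite ?subr_ge0.
    have h2 : 0 <= S * rho by apply: mulr_ge0.
    have h3 : 0 <= (p%:R - #|Del|%:R) * (2 * (1 - eps) * rho).
      by apply: mulr_ge0 => //; apply: mulr_ge0 => //; lra.
    nra.
  + rewrite sumrN sum_ind_all sumrN sum_ind.
    have he : ((e \in Del)%:R : R) <= 1 by case: (e \in Del).
    have h2 : 0 <= (1 - (e \in Del)%:R) * rho by apply: mulr_ge0; rewrite ?subr_ge0.
    nra.
  + rewrite sum_ind_all sum_ind.
    have h2 : 0 <= (e \in Del)%:R * rho by apply: mulr_ge0.
    have h3 : 0 <= (p%:R - #|Del|%:R) * rho by apply: mulr_ge0.
    have h4 : 0 <= (l%:R - 1) * rho by apply: mulr_ge0; rewrite ?subr_ge0.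
    nra.
Qed.
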